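(* Let $\mathbf X\in\mathbb R^{n\times p}$, $\boldsymbol\beta\in\mathbb R^p$ with support $S=\{j:\beta_j\neq0\}$, $\sigma>0$, and let $\check{\boldsymbol\beta}\in\mathbb R^p$ satisfy $\mathrm{sgn}(\check{\boldsymbol\beta})=\mathrm{sgn}(\boldsymbol\beta)$ componentwise. For $t\in[0,1)$ and $\lambda>0$ let $\Lambda_{\lambda,t}$ be the set of $\boldsymbol\zeta\in\mathbb R^n$ for which there is a Lasso solution $\hat{\boldsymbol\beta}=\hat{\boldsymbol\beta}_\lambda(\boldsymbol\beta,\sigma\boldsymbol\zeta)$ with $\mathrm{sgn}(\hat{\boldsymbol\beta}_S)=\mathrm{sgn}(\boldsymbol\beta_S)$ and $\min_{j\in S}\hat\beta_j/\beta_j>t$. Suppose $\check\sigma>0$ satisfies $$0<\check\sigma/\sigma<\min_{j\in S}\frac{\check\beta_j}{(1-t)\beta_j}.$$ Then for every $\boldsymbol\zeta\in\Lambda_{\lambda,t}$ for which the residuals below are well-defined (nonzero denominators), $\hat{\mathbf R}_\lambda(\boldsymbol\beta,\sigma\boldsymbol\zeta)=\hat{\mathbf R}_\lambda(\check{\boldsymbol\beta},\check\sigma\boldsymbol\zeta)$.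
   Context: For $\mathbf b_0\in\mathbb R^p$, $\mathbf w\in\mathbb R^n$ and $\lambda>0$, a (square-root) Lasso solution is any $\hat{\boldsymbol\beta}_\lambda(\mathbf b_0,\mathbf w)\in\arg\min_{\mathbf b\in\mathbb R^p}\{\|\mathbf X(\mathbf b_0-\mathbf b)+\mathbf w\|_2/\sqrt n+\lambda\|\mathbf b\|_1\}$, i.e. a square-root Lasso fit of the response $\mathbf X\mathbf b_0+\mathbf w$ on $\mathbf X$; the fitted values $\mathbf X\hat{\boldsymbol\beta}_\lambda$ are unique even if the minimiser is not. The scaled Lasso residuals are $\hat{\mathbf R}_\lambda(\mathbf b_0,\mathbf w)=\{\mathbf X(\mathbf b_0-\hat{\boldsymbol\beta}_\lambda(\mathbf b_0,\mathbf w))+\mathbf w\}/\|\mathbf X(\mathbf b_0-\hat{\boldsymbol\beta}_\lambda(\mathbf b_0,\mathbf w))+\mathbf w\|_2$. For a vector $\mathbf b$ and $A\subseteq\{1,\dots,p\}$, $\mathbf b_A$ is the subvector indexed by $A$; $\mathrm{sgn}$ is applied componentwise. *)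

(* Defs.v *)
From HB Require Import structures.
From mathcomp Require Import all_boot all_order all_algebra.
Set Implicit Arguments. Unset Strict Implicit. Unset Printing Implicit Defensive.
Import Order.TTheory GRing.Theory Num.Theory.
Local Open Scope ring_scope.

Definition norm2 (R : rcfType) (m : nat) (v : 'cV[R]_m) : R :=
  Num.sqrt (\sum_(i < m) (v i 0) ^+ 2).

Definition norm1 (R : rcfType) (m : nat) (v : 'cV[R]_m) : R :=
  \sum_(i < m) `|v i 0|.

Definition sqlasso_obj (R : rcfType) (n p : nat) (X : 'M[R]_(n, p))
    (lam : R) (b0 : 'cV[R]_p) (w : 'cV[R]_n) (b : 'cV[R]_p) : R :=
  norm2 (X *m (b0 - b) + w) / Num.sqrt (n%:R) + lam * norm1 b.

Definition is_lasso_sol (R : rcfType) (n p : nat) (X : 'M[R]_(n, p))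
    (lam : R) (b0 : 'cV[R]_p) (w : 'cV[R]_n) (bh : 'cV[R]_p) : Prop :=
  forall b : 'cV[R]_p, sqlasso_obj X lam b0 w bh <= sqlasso_obj X lam b0 w b.

Definition lasso_res (R : rcfType) (n p : nat) (X : 'M[R]_(n, p))
    (b0 : 'cV[R]_p) (w : 'cV[R]_n) (bh : 'cV[R]_p) : 'cV[R]_n :=
  X *m (b0 - bh) + w.

Definition scaled_res (R : rcfType) (n p : nat) (X : 'M[R]_(n, p))
    (b0 : 'cV[R]_p) (w : 'cV[R]_n) (bh : 'cV[R]_p) : 'cV[R]_n :=
  (norm2 (lasso_res X b0 w bh))^-1 *: lasso_res X b0 w bh.

Definition in_Lambda (R : rcfType) (n p : nat) (X : 'M[R]_(n, p))
    (beta : 'cV[R]_p) (sigma lam t : R) (zeta : 'cV[R]_n) : Prop :=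
  exists bh : 'cV[R]_p,
    is_lasso_sol X lam beta (sigma *: zeta) bh /\
    (forall j : 'I_p, beta j 0 != 0 -> Num.sg (bh j 0) = Num.sg (beta j 0)) /\
    (forall j : 'I_p, beta j 0 != 0 -> t < bh j 0 / beta j 0).

(* Main.v *)
Require Import Defs.
From HB Require Import structures.
From mathcomp Require Import all_boot all_order all_algebra.
From mathcomp Require Import ring lra.
Import Order.TTheory GRing.Theory Num.Theory.
Local Open Scope ring_scope.
Set Implicit Arguments. Unset Strict Implicit. Unset Printing Implicit Defensive.

Definition dotv (R : rcfType) (m : nat) (u v : 'cV[R]_m) : R :=
  \sum_(i < m) u i 0 * v i 0.

Lemma dotv_ge0 (R : rcfType) (m : nat) (u : 'cV[R]_m) : 0 <= dotv u u.
Proof. by apply: sumr_ge0 => i _; rewrite -expr2 sqr_ge0. Qed.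

Lemma norm2_ge0 (R : rcfType) (m : nat) (u : 'cV[R]_m) : 0 <= norm2 u.
Proof. exact: sqrtr_ge0. Qed.

Lemma norm2_sq (R : rcfType) (m : nat) (u : 'cV[R]_m) : norm2 u ^+ 2 = dotv u u.
Proof.
rewrite /norm2 sqr_sqrtr; last by apply: sumr_ge0 => i _; rewrite sqr_ge0.
by apply: eq_bigr => i _; rewrite expr2.
Qed.

Lemma dotv_lin (R : rcfType) (m : nat) (x y : R) (u v : 'cV[R]_m) :
  dotv (x *: u + y *: v) (x *: u + y *: v) =
  x ^+ 2 * dotv u u + (2 * x * y) * dotv u v + y ^+ 2 * dotv v v.
Proof.
rewrite /dotv !mulr_sumr -!big_split /=; apply: eq_bigr => i _; rewrite !mxE; ring.
Qed.

Lemma dotv_eq0 (R : rcfType) (m : nat) (u : 'cV[R]_m) : dotv u u = 0 -> u = 0.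
Proof.
move=> h; apply/matrixP => i j; rewrite (ord1 j) mxE.
have H0 : forall k : 'I_m, xpredT k -> 0 <= u k 0 * u k 0.
  by move=> k _; rewrite -expr2 sqr_ge0.
rewrite /dotv in h; have := psumr_eq0P H0 h. move=> X; have := X i isT.
by move/eqP; rewrite mulf_eq0 orbb => /eqP.
Qed.

Lemma norm2_eq0 (R : rcfType) (m : nat) (u : 'cV[R]_m) : norm2 u = 0 -> u = 0.
Proof.
move=> h; apply: dotv_eq0; by rewrite -norm2_sq h expr0n.
Qed.

Lemma norm2_scale (R : rcfType) (m : nat) (a : R) (u : 'cV[R]_m) :
  norm2 (a *: u) = `|a| * norm2 u.
Proof.
rewrite /norm2 -sqrtr_sqr -sqrtrM ?sqr_ge0 // mulr_sumr.
by congr Num.sqrt; apply: eq_bigr => i _; rewrite mxE exprMn.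
Qed.

Lemma cauchy_schwarz (R : rcfType) (m : nat) (u v : 'cV[R]_m) :
  dotv u v <= norm2 u * norm2 v.
Proof.
have [hu|hu] := eqVneq (norm2 u) 0.
  rewrite hu mul0r (norm2_eq0 hu) /dotv big1 // => i _; by rewrite mxE mul0r.
have [hv|hv] := eqVneq (norm2 v) 0.
  rewrite hv mulr0 (norm2_eq0 hv) /dotv big1 // => i _; by rewrite mxE mulr0.
have a0 : 0 < norm2 u by rewrite lt_def hu norm2_ge0.
have b0 : 0 < norm2 v by rewrite lt_def hv norm2_ge0.
have := dotv_ge0 (norm2 v *: u + (- norm2 u) *: v).
rewrite dotv_lin -!norm2_sq.
set a := norm2 u; set b := norm2 v; set d := dotv u v => H.
have hab : 0 < a * b by rewrite mulr_gt0.
nra.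
Qed.

Lemma norm2_triangle (R : rcfType) (m : nat) (u v : 'cV[R]_m) :
  norm2 (u + v) <= norm2 u + norm2 v.
Proof.
have H : norm2 (u + v) ^+ 2 = norm2 u ^+ 2 + 2 * dotv u v + norm2 v ^+ 2.
  by rewrite norm2_sq -(scale1r u) -(scale1r v) dotv_lin !scale1r -!norm2_sq; ring.
have := cauchy_schwarz u v; have := norm2_ge0 u; have := norm2_ge0 v;
have := norm2_ge0 (u + v). nra.
Qed.

Lemma norm2_triangle_eq (R : rcfType) (m : nat) (u v : 'cV[R]_m) :
  norm2 u + norm2 v <= norm2 (u + v) -> norm2 v *: u = norm2 u *: v.
Proof.
move=> hle.
have H : norm2 (u + v) ^+ 2 = norm2 u ^+ 2 + 2 * dotv u v + norm2 v ^+ 2.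
  by rewrite norm2_sq -(scale1r u) -(scale1r v) dotv_lin !scale1r -!norm2_sq; ring.
have ht := norm2_triangle u v.
have hd : dotv u v = norm2 u * norm2 v.
  have he : norm2 (u + v) = norm2 u + norm2 v by apply/eqP; rewrite eq_le hle ht.
  move: H; rewrite he => H; nra.
have : dotv (norm2 v *: u + (- norm2 u) *: v) (norm2 v *: u + (- norm2 u) *: v) = 0.
  rewrite dotv_lin -!norm2_sq hd; ring.
move/dotv_eq0 => h0; apply/matrixP => i j.
have := congr1 (fun M : 'cV_m => M i j) h0; rewrite !mxE /= => h1.
by apply/eqP; rewrite -subr_eq0; apply/eqP; rewrite -h1; ring.
Qed.

Lemma res_comb (R : rcfType) (n p : nat) (X : 'M[R]_(n, p)) (b0 : 'cV[R]_p)
  (w : 'cV[R]_n) (s : R) (x y : 'cV[R]_p) :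
  lasso_res X b0 w ((1 - s) *: x + s *: y) =
  (1 - s) *: lasso_res X b0 w x + s *: lasso_res X b0 w y.
Proof.
rewrite /lasso_res.
have -> : b0 - ((1 - s) *: x + s *: y) = (1 - s) *: (b0 - x) + s *: (b0 - y).
  by apply/matrixP => i j; rewrite !mxE; ring.
rewrite mulmxDr -!scalemxAr.
move: (X *m (b0 - x)) (X *m (b0 - y)) => A B.
by apply/matrixP => i j; rewrite !mxE; ring.
Qed.

Lemma norm1_comb (R : rcfType) (p : nat) (s : R) (x y : 'cV[R]_p) :
  0 <= s -> s <= 1 ->
  norm1 ((1 - s) *: x + s *: y) <= (1 - s) * norm1 x + s * norm1 y.
Proof.
move=> s0 s1; rewrite /norm1 !mulr_sumr -big_split /=.
apply: ler_sum => i _; rewrite !mxE.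
apply: le_trans (ler_normD _ _) _.
by rewrite !normrM (ger0_norm s0) ger0_norm // subr_ge0.
Qed.

Lemma obj_convex (R : rcfType) (n p : nat) (X : 'M[R]_(n, p)) (lam : R)
  (b0 : 'cV[R]_p) (w : 'cV[R]_n) (s : R) (x y : 'cV[R]_p) :
  0 <= lam -> 0 <= s -> s <= 1 ->
  sqlasso_obj X lam b0 w ((1 - s) *: x + s *: y) <=
  (1 - s) * sqlasso_obj X lam b0 w x + s * sqlasso_obj X lam b0 w y.
Proof.
move=> l0 s0 s1; rewrite /sqlasso_obj.
have := norm1_comb x y s0 s1.
have hn : norm2 (X *m (b0 - ((1 - s) *: x + s *: y)) + w) <=
   (1 - s) * norm2 (X *m (b0 - x) + w) + s * norm2 (X *m (b0 - y) + w).
  have := res_comb X b0 w s x y; rewrite /lasso_res => ->.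
  apply: le_trans (norm2_triangle _ _) _.
  by rewrite !norm2_scale (ger0_norm s0) ger0_norm // subr_ge0.
have k0 : 0 <= (Num.sqrt (n%:R : R))^-1 by rewrite invr_ge0 sqrtr_ge0.
move: hn k0.
set A := norm2 _; set B := norm2 _; set C := norm2 _.
set k := (Num.sqrt _)^-1; set N := norm1 _; set Nx := norm1 x; set Ny := norm1 y.
move=> hn k0 hN.
have h1 : A * k <= ((1 - s) * B + s * C) * k by apply: ler_wpM2r.
have h2 : lam * N <= lam * ((1 - s) * Nx + s * Ny) by apply: ler_wpM2l.
apply: le_trans (lerD h1 h2) _; rewrite le_eqVlt; apply/orP; left; apply/eqP; ring.
Qed.

Lemma objE (R : rcfType) (n p : nat) (X : 'M[R]_(n, p)) (lam : R)
  (b0 : 'cV[R]_p) (w : 'cV[R]_n) (b : 'cV[R]_p) :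
  sqlasso_obj X lam b0 w b =
  norm2 (lasso_res X b0 w b) * (Num.sqrt (n%:R : R))^-1 + lam * norm1 b.
Proof. by []. Qed.

Lemma npos (R : rcfType) (n : nat) (v : 'cV[R]_n) : norm2 v != 0 -> (0 < n)%N.
Proof.
move=> hv; rewrite lt0n; apply/negP => /eqP n0; move: hv.
rewrite /norm2 big_pred0 ?sqrtr0 ?eqxx // => i.
by have := ltn_ord i; move: (nat_of_ord i); rewrite n0.
Qed.

Lemma scaled_unique (R : rcfType) (n p : nat) (X : 'M[R]_(n, p)) (lam : R)
  (b0 : 'cV[R]_p) (w : 'cV[R]_n) (x y : 'cV[R]_p) :
  0 <= lam -> is_lasso_sol X lam b0 w x -> is_lasso_sol X lam b0 w y ->
  norm2 (lasso_res X b0 w x) != 0 -> norm2 (lasso_res X b0 w y) != 0 ->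
  scaled_res X b0 w x = scaled_res X b0 w y.
Proof.
move=> l0 hx hy nx ny.
have n0 := npos nx.
have k0 : 0 < (Num.sqrt (n%:R : R))^-1 by rewrite invr_gt0 sqrtr_gt0 ltr0n.
set h : R := 2^-1.
have hh : 1 - h = h by rewrite /h; field.
have h0 : 0 <= h by rewrite /h invr_ge0 ler0n.
have h1 : h <= 1 by rewrite /h invf_le1 ?ler1n ?ltr0n.
set m := (1 - h) *: x + h *: y.
have e1 := hx m; have e2 := hx y; have e3 := hy x.
have hN := norm1_comb x y h0 h1.
move: e1 e2 e3; rewrite !objE.
rewrite -/m res_comb hh.
have -> : h *: lasso_res X b0 w x + h *: lasso_res X b0 w y =
   h *: (lasso_res X b0 w x + lasso_res X b0 w y).
  by apply/matrixP => i j; rewrite !mxE; ring.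
rewrite norm2_scale (ger0_norm h0).
move: hN; rewrite -/m.
set rx := lasso_res X b0 w x; set ry := lasso_res X b0 w y.
set k := (Num.sqrt _)^-1.
set S := norm2 (rx + ry); set Nx := norm2 rx; set Ny := norm2 ry.
set N1m := norm1 m; set N1x := norm1 x; set N1y := norm1 y.
move=> hN e1 e2 e3.
have hl : lam * N1m <= h * (lam * N1x) + h * (lam * N1y).
  have H := ler_wpM2l l0 hN. apply: le_trans H _; by rewrite mulrDr !mulrA hh [lam * h]mulrC.
have h2 : h * 2 = 1 by rewrite /h mulVf ?pnatr_eq0.
have key : (Nx + Ny) * k <= S * k.
  have : h * ((Nx + Ny) * k) <= h * (S * k).
    set a := lam * N1x in hl e2 e3 *; set b := lam * N1y in hl e2 e3 *.
    set c := lam * N1m in hl e1 *.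
    have -> : h * ((Nx + Ny) * k) = h * (Nx * k + a) + h * (Ny * k + b) - (h * a + h * b) by ring.
    have -> : h * (S * k) = h * S * k + c - c by ring.
    have : h * (Nx * k + a) + h * (Ny * k + b) <= h * S * k + c.
      have : Nx * k + a = h * (Nx * k + a) + h * (Ny * k + b).
        have ee : Nx * k + a = Ny * k + b by apply/eqP; rewrite eq_le e2 e3.
        rewrite -ee -mulrDl -[h + h]mulr2n -mulr_natr h2 mul1r //.
      by move=> <-.
    lra.
  by rewrite ler_pM2l // /h invr_gt0 ltr0n.
have key2 : Nx + Ny <= S by move: key; rewrite ler_pM2r.
have E := norm2_triangle_eq key2.
rewrite /scaled_res -/rx -/ry -/Nx -/Ny.
have nx' : Nx != 0 by []. have ny' : Ny != 0 by [].
rewrite -/Nx -/Ny in E. clearbody Nx Ny S; clearbody rx ry.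
apply/matrixP => i j; have := congr1 (fun M : 'cV_n => M i j) E; rewrite !mxE /= => e.
have ex : rx i j = Nx * ry i j / Ny.
  by rewrite -e mulrC mulrA mulVf ?mul1r.
rewrite ex; field.
by rewrite nx' ny'.
Qed.

Lemma coord_eq (R : rcfType) (bj bcj yj c t : R) :
  bj != 0 -> 0 <= t -> t < 1 -> 0 < c -> t < yj / bj ->
  c < bcj / ((1 - t) * bj) ->
  `|bcj - c * (bj - yj)| = c * `|yj| + (`|bcj| - c * `|bj|).
Proof.
move=> hb0 t0 t1 c0 hy hc.
case: (ltgtP bj 0) => hb; last by rewrite hb eqxx in hb0.
- have h1 : (1 - t) * bj < 0 by nra.
  move: hy hc; rewrite ltr_ndivlMr // ltr_ndivlMr // => hy hc.
  have y0 : yj < 0 by nra.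
  have bc0 : bcj < 0 by nra.
  have f0 : bcj - c * (bj - yj) < 0 by nra.
  rewrite (ltr0_norm f0) (ltr0_norm y0) (ltr0_norm bc0) (ltr0_norm hb); ring.
- have h1 : 0 < (1 - t) * bj by nra.
  move: hy hc; rewrite ltr_pdivlMr // ltr_pdivlMr // => hy hc.
  have y0 : 0 < yj by nra.
  have bc0 : 0 < bcj by nra.
  have f0 : 0 < bcj - c * (bj - yj) by nra.
  rewrite (gtr0_norm f0) (gtr0_norm y0) (gtr0_norm bc0) (gtr0_norm hb); ring.
Qed.

Definition good (R : rcfType) (p : nat) (beta : 'cV[R]_p) (t : R) (y : 'cV[R]_p) :=
  forall j : 'I_p, beta j 0 != 0 -> t < y j 0 / beta j 0.

Lemma perturb (R : rcfType) (p : nat) (beta : 'cV[R]_p) (t : R) (y y' : 'cV[R]_p) :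
  good beta t y -> exists s : R, [/\ 0 < s, s <= 1 & good beta t ((1 - s) *: y + s *: y')].
Proof.
move=> hg.
pose a j := y j 0 / beta j 0 - t.
pose d j := y' j 0 / beta j 0 - y j 0 / beta j 0.
pose T : R := \sum_(j | beta j 0 != 0) ((`|d j| + 1) / a j).
have ha : forall j, beta j 0 != 0 -> 0 < a j by move=> j hj; rewrite /a subr_gt0 hg.
have hT : 0 <= T.
  by apply: sumr_ge0 => j hj; apply: divr_ge0; [by rewrite addr_ge0 | apply: ltW; exact: ha].
pose s : R := (1 + T)^-1.
have s0 : 0 < s by rewrite invr_gt0; lra.
exists s; split => //.
- by rewrite invf_le1; lra.
move=> j hj; rewrite !mxE.
have hTj : (`|d j| + 1) / a j <= T.
  rewrite /T (bigD1 j) //=; rewrite lerDl; apply: sumr_ge0 => k /andP [hk _].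
  by apply: divr_ge0; [by rewrite addr_ge0 | apply: ltW; exact: ha].
have aj := ha j hj.
have e1 : s * (1 + T) = 1 by rewrite /s mulVf //; lra.
have e2 : (`|d j| + 1) <= T * a j by rewrite -ler_pdivrMr.
have hd : - `|d j| <= d j by have := ler_norm (- d j); rewrite normrN; lra.
have key : 0 < a j + s * d j.
  have : s * (`|d j| + 1) <= s * (T * a j) by rewrite ler_pM2l.
  have : s * T < 1. rewrite mulrDr mulr1 in e1. lra.
  nra.
have -> : ((1 - s) * y j 0 + s * y' j 0) / beta j 0 = t + (a j + s * d j) by rewrite /a /d; ring.
lra.
Qed.

Lemma res_phi (R : rcfType) (n p : nat) (X : 'M[R]_(n, p)) (beta betac y : 'cV[R]_p)
  (sigma sigmac c : R) (zeta : 'cV[R]_n) : sigmac = c * sigma ->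
  lasso_res X betac (sigmac *: zeta) (betac - c *: (beta - y)) =
  c *: lasso_res X beta (sigma *: zeta) y.
Proof.
move=> hs; rewrite /lasso_res.
have -> : betac - (betac - c *: (beta - y)) = c *: (beta - y).
  by apply/matrixP => i j; rewrite !mxE; ring.
rewrite -scalemxAr; move: (X *m (beta - y)) => A.
by apply/matrixP => i j; rewrite !mxE hs; ring.
Qed.

Lemma norm1_phi (R : rcfType) (p : nat) (beta betac y : 'cV[R]_p) (c t : R) :
  0 <= t -> t < 1 -> 0 < c ->
  (forall j : 'I_p, Num.sg (betac j 0) = Num.sg (beta j 0)) ->
  (forall j : 'I_p, beta j 0 != 0 -> c < betac j 0 / ((1 - t) * beta j 0)) ->
  good beta t y ->
  norm1 (betac - c *: (beta - y)) =
  c * norm1 y + \sum_(j < p) (`|betac j 0| - c * `|beta j 0|).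
Proof.
move=> t0 t1 c0 hsgn hrat hg.
rewrite /norm1 mulr_sumr -big_split /=; apply: eq_bigr => j _; rewrite !mxE.
have [hb|hb] := eqVneq (beta j 0) 0.
  have hc : betac j 0 = 0 by apply/eqP; rewrite -sgr_eq0 hsgn hb sgr0.
  rewrite hb hc !normr0 mulr0 subr0 sub0r sub0r mulrN opprK normrM (gtr0_norm c0).
  by rewrite addr0.
have := coord_eq hb t0 t1 c0 (hg j hb) (hrat j hb).
by [].
Qed.

Lemma obj_phi (R : rcfType) (n p : nat) (X : 'M[R]_(n, p)) (lam : R)
  (beta betac y : 'cV[R]_p) (sigma sigmac c t : R) (zeta : 'cV[R]_n) :
  0 <= t -> t < 1 -> 0 < c -> sigmac = c * sigma ->
  (forall j : 'I_p, Num.sg (betac j 0) = Num.sg (beta j 0)) ->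
  (forall j : 'I_p, beta j 0 != 0 -> c < betac j 0 / ((1 - t) * beta j 0)) ->
  good beta t y ->
  sqlasso_obj X lam betac (sigmac *: zeta) (betac - c *: (beta - y)) =
  c * sqlasso_obj X lam beta (sigma *: zeta) y +
  lam * \sum_(j < p) (`|betac j 0| - c * `|beta j 0|).
Proof.
move=> t0 t1 c0 hs hsgn hrat hg.
rewrite !objE (@res_phi _ _ _ X beta betac y sigma sigmac c zeta hs) norm2_scale (gtr0_norm c0).
rewrite (norm1_phi t0 t1 c0 hsgn hrat hg); ring.
Qed.

Lemma phi_min (R : rcfType) (n p : nat) (X : 'M[R]_(n, p)) (lam : R)
  (beta betac B : 'cV[R]_p) (sigma sigmac c t : R) (zeta : 'cV[R]_n) :
  0 <= lam -> 0 <= t -> t < 1 -> 0 < c -> sigmac = c * sigma ->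
  (forall j : 'I_p, Num.sg (betac j 0) = Num.sg (beta j 0)) ->
  (forall j : 'I_p, beta j 0 != 0 -> c < betac j 0 / ((1 - t) * beta j 0)) ->
  good beta t B -> is_lasso_sol X lam beta (sigma *: zeta) B ->
  is_lasso_sol X lam betac (sigmac *: zeta) (betac - c *: (beta - B)).
Proof.
move=> l0 t0 t1 c0 hs hsgn hrat hg hB x.
pose y' := beta - c^-1 *: (betac - x).
have ex : betac - c *: (beta - y') = x.
  apply/matrixP => i j; rewrite /y' !mxE; field; by rewrite gt_eqF.
have [s [s0 s1 hgs]] := perturb y' hg.
set Bs := (1 - s) *: B + s *: y'.
have hphi : betac - c *: (beta - Bs) =
   (1 - s) *: (betac - c *: (beta - B)) + s *: (betac - c *: (beta - y')).
  by apply/matrixP => i j; rewrite !mxE; ring.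
rewrite ex in hphi.
have H1 := obj_phi X lam zeta t0 t1 c0 hs hsgn hrat hg.
have H2 := obj_phi X lam zeta t0 t1 c0 hs hsgn hrat hgs.
have H3 := hB Bs.
have H4 := @obj_convex R n p X lam betac (sigmac *: zeta) s (betac - c *: (beta - B)) x l0 (ltW s0) s1.
rewrite -hphi -/Bs in H4.
move: H1 H2 H3 H4.
set A := sqlasso_obj _ _ _ _ (betac - c *: (beta - B)).
set A' := sqlasso_obj _ _ _ _ (betac - c *: (beta - Bs)).
set K := lam * _.
set O := sqlasso_obj _ _ _ _ B; set O' := sqlasso_obj _ _ _ _ Bs.
set Z := sqlasso_obj _ _ _ _ x.
move=> H1 H2 H3 H4.
have H5 : c * O <= c * O' by rewrite ler_pM2l.
have : s * A <= s * Z by nra.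
by rewrite ler_pM2l.
Qed.

Lemma scaled_phi (R : rcfType) (n p : nat) (X : 'M[R]_(n, p)) (beta betac y : 'cV[R]_p)
  (sigma sigmac c : R) (zeta : 'cV[R]_n) : sigmac = c * sigma -> 0 < c ->
  norm2 (lasso_res X beta (sigma *: zeta) y) != 0 ->
  scaled_res X betac (sigmac *: zeta) (betac - c *: (beta - y)) =
  scaled_res X beta (sigma *: zeta) y.
Proof.
move=> hs c0 hn; rewrite /scaled_res (@res_phi _ _ _ X beta betac y sigma sigmac c zeta hs).
rewrite norm2_scale (gtr0_norm c0).
move: hn; move: (lasso_res X beta (sigma *: zeta) y) => r hn.
apply/matrixP => i j; rewrite !mxE; field.
by rewrite hn gt_eqF.
Qed.

Unset Implicit Arguments.

Theorem theorem1 (R : rcfType) (n p : nat) (X : 'M[R]_(n, p))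
    (beta betac : 'cV[R]_p) (sigma sigmac lam t : R)
    (hsigma : 0 < sigma) (hlam : 0 < lam) (ht0 : 0 <= t) (ht1 : t < 1)
    (hsgn : forall j : 'I_p, Num.sg (betac j 0) = Num.sg (beta j 0))
    (hsigmac : 0 < sigmac)
    (hratio0 : 0 < sigmac / sigma)
    (hratio : forall j : 'I_p, beta j 0 != 0 ->
        sigmac / sigma < betac j 0 / ((1 - t) * beta j 0))
    (zeta : 'cV[R]_n)
    (hzeta : in_Lambda X beta sigma lam t zeta) :
  forall bh1 bh2 : 'cV[R]_p,
    is_lasso_sol X lam beta (sigma *: zeta) bh1 ->
    is_lasso_sol X lam betac (sigmac *: zeta) bh2 ->
    norm2 (lasso_res X beta (sigma *: zeta) bh1) != 0 ->
    norm2 (lasso_res X betac (sigmac *: zeta) bh2) != 0 ->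
    scaled_res X beta (sigma *: zeta) bh1 = scaled_res X betac (sigmac *: zeta) bh2.
Proof.
move=> bh1 bh2 h1 h2 n1 n2.
have hs : sigmac = (sigmac / sigma) * sigma by rewrite mulfVK // gt_eqF.
move: hratio0 hratio hs; set c := sigmac / sigma => c0 hrat hs.
have l0 : 0 <= lam := ltW hlam.
case: hzeta => bh [hbh [_ hg]].
have [B [hgB hB nB eB]] : exists B, [/\ good beta t B,
    is_lasso_sol X lam beta (sigma *: zeta) B,
    norm2 (lasso_res X beta (sigma *: zeta) B) != 0 &
    scaled_res X beta (sigma *: zeta) bh1 = scaled_res X beta (sigma *: zeta) B].
  have [hz|hnz] := eqVneq (norm2 (lasso_res X beta (sigma *: zeta) bh)) 0; last first.
    by exists bh; split => //; apply: (@scaled_unique _ _ _ X lam).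
  have [s [s0 s1 hgs]] := perturb bh1 hg.
  have hBs : is_lasso_sol X lam beta (sigma *: zeta) ((1 - s) *: bh + s *: bh1).
    move=> b; apply: le_trans (@obj_convex R n p X lam beta (sigma *: zeta) s bh bh1 l0 (ltW s0) s1) _.
    have := hbh b; have := h1 b; nra.
  have nBs : norm2 (lasso_res X beta (sigma *: zeta) ((1 - s) *: bh + s *: bh1)) != 0.
    rewrite res_comb (norm2_eq0 hz) scaler0 add0r norm2_scale (gtr0_norm s0).
    by rewrite mulf_neq0 // gt_eqF.
  by exists ((1 - s) *: bh + s *: bh1); split => //; apply: (@scaled_unique _ _ _ X lam).
rewrite eB -(scaled_phi betac hs c0 nB).
apply: (@scaled_unique _ _ _ X lam) => //.
- exact: (phi_min l0 ht0 ht1 c0 hs hsgn hrat hgB hB).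
- rewrite (@res_phi _ _ _ X beta betac B sigma sigmac c zeta hs) norm2_scale (gtr0_norm c0).
  by rewrite mulf_neq0 // gt_eqF.
Qed.
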